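(* Let $\alpha$ be a graph function on a strongly connected digraph $G$. There is a real number $b>-\infty$ such that no finite sequence of balancing operations applied starting from $\alpha$ can produce a graph function having an edge of weight less than $b$.
   Context: $G$ is a strongly connected directed graph (self-loops allowed); a graph function assigns a real weight $\alpha_{uv}$ to each edge. $\alpha_v^{\text{in}}=\max_{u:(u,v)\in G}\alpha_{uv}$, $\alpha_v^{\text{out}}=\max_{w:(v,w)\in G}\alpha_{vw}$. The balancing operation at a vertex $v$ adds $(\alpha_v^{\text{out}}-\alpha_v^{\text{in}})/2$ to each edge weight $\alpha_{uv}$ with $u\ne v$, subtracts the same amount from each $\alpha_{vw}$ with $w\ne v$, and leaves a self-loop at $v$ unchanged. *)

(* Defs.v *)
From HB Require Import structures.
From mathcomp Require Import all_boot all_order all_algebra.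
From mathcomp Require Import reals.
Set Implicit Arguments. Unset Strict Implicit. Unset Printing Implicit Defensive.
Import Order.TTheory GRing.Theory Num.Theory.
Local Open Scope ring_scope.

(* A directed graph (self-loops allowed) on a finite vertex type V is given by
   its edge relation E : rel V ((u,v) is an edge iff E u v). *)
Definition strongly_connected (V : finType) (E : rel V) : Prop :=
  forall u v : V, connect E u v.

(* A graph function: a real weight alpha u v for each edge (u,v);
   values off the edge set are irrelevant. *)
Definition graph_fun (R : realType) (V : finType) := V -> V -> R.

(* alpha_v^in = max over in-edges (u,v); alpha_v^out = max over out-edges (v,w).
   (Default 0 if there is no such edge, which never happens in a strongly
   connected graph with an edge.) *)
Definition alpha_in (R : realType) (V : finType) (E : rel V)
    (alpha : graph_fun R V) (v : V) : R :=
  match [pick u | E u v] with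
  | Some u0 => \big[Num.max/alpha u0 v]_(u | E u v) alpha u v
  | None => 0
  end.

Definition alpha_out (R : realType) (V : finType) (E : rel V)
    (alpha : graph_fun R V) (v : V) : R :=
  match [pick w | E v w] with
  | Some w0 => \big[Num.max/alpha v w0]_(w | E v w) alpha v w
  | None => 0
  end.

Definition balance (R : realType) (V : finType) (E : rel V)
    (alpha : graph_fun R V) (v : V) : graph_fun R V :=
  let d := (alpha_out E alpha v - alpha_in E alpha v) / 2 in
  fun x y =>
    if E x y then
      if (y == v) && (x != v) then alpha x y + d
      else if (x == v) && (y != v) then alpha x y - d
      else alpha x y
    else alpha x y.

Definition balance_seq (R : realType) (V : finType) (E : rel V)
    (alpha : graph_fun R V) (s : seq V) : graph_fun R V :=
  foldl (balance E) alpha s.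

(* Main.v *)
Require Import Defs.
From HB Require Import structures.
From mathcomp Require Import all_boot all_order all_algebra.
From mathcomp Require Import reals.
From mathcomp Require Import lra.
Set Implicit Arguments. Unset Strict Implicit.
Import Order.TTheory GRing.Theory Num.Theory.
Local Open Scope ring_scope.

Section L.
Variables (R : realType) (V : finType) (E : rel V).

Lemma in_ge (b : graph_fun R V) u v : E u v -> b u v <= alpha_in E b v.
Proof.
move=> Euv; rewrite /alpha_in; case: pickP => [u0 _|/(_ u)]; last by rewrite Euv.
by rewrite (bigD1 u) //= le_max lexx.
Qed.

Lemma out_ge (b : graph_fun R V) v w : E v w -> b v w <= alpha_out E b v.
Proof.
move=> Evw; rewrite /alpha_out; case: pickP => [w0 _|/(_ w)]; last by rewrite Evw.
by rewrite (bigD1 w) //= le_max lexx.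
Qed.

Lemma in_le (b : graph_fun R V) v M : 0 <= M ->
  (forall x y, E x y -> b x y <= M) -> alpha_in E b v <= M.
Proof.
move=> M0 H; rewrite /alpha_in; case: pickP => [u0 Eu0|//].
apply: (big_ind (fun x => x <= M)); first exact: H.
  by move=> a c ha hc; rewrite ge_max ha hc.
by move=> i Ei; apply: H.
Qed.

Lemma out_le (b : graph_fun R V) v M : 0 <= M ->
  (forall x y, E x y -> b x y <= M) -> alpha_out E b v <= M.
Proof.
move=> M0 H; rewrite /alpha_out; case: pickP => [w0 Ew0|//].
apply: (big_ind (fun x => x <= M)); first exact: H.
  by move=> a c ha hc; rewrite ge_max ha hc.
by move=> i Ei; apply: H.
Qed.

Lemma balance_le (b : graph_fun R V) v M : 0 <= M ->
  (forall x y, E x y -> b x y <= M) ->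
  (forall x y, E x y -> balance E b v x y <= M).
Proof.
move=> M0 H x y Exy.
have hi := in_le v M0 H; have ho := out_le v M0 H.
rewrite /balance Exy.
case: (eqVneq y v) => [yv|yv]; case: (eqVneq x v) => [xv|xv] /=.
- exact: H.
- subst y; have := in_ge b Exy; lra.
- subst x; have := out_ge b Exy; lra.
- exact: H.
Qed.

Lemma balance_seq_le (a : graph_fun R V) M : 0 <= M ->
  (forall x y, E x y -> a x y <= M) ->
  forall s x y, E x y -> balance_seq E a s x y <= M.
Proof.
move=> M0 H s; elim/last_ind: s => [|s v IH] /=; first exact: H.
rewrite /balance_seq foldl_rcons; by apply: balance_le => //.
Qed.

Lemma balance_seq_pot (a : graph_fun R V) s : exists P : V -> R,
  forall x y, E x y -> balance_seq E a s x y = a x y + P y - P x.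
Proof.
elim/last_ind: s => [|s v [P HP]].
  by exists (fun _ => 0) => x y _; rewrite /= addr0 subr0.
set b := balance_seq E a s.
set d := (alpha_out E b v - alpha_in E b v) / 2.
exists (fun z => P z + (if z == v then d else 0)) => x y Exy.
rewrite /balance_seq foldl_rcons -/(balance_seq E a s) -/b /balance -/d Exy.
have HP' : b x y = a x y + P y - P x by apply: HP.
rewrite HP'.
case: (eqVneq y v) => [->|yv]; case: (eqVneq x v) => [->|xv] /=; lra.
Qed.

Fixpoint wsum (b : graph_fun R V) (y : V) (p : seq V) : R :=
  match p with [::] => 0 | z :: p' => b y z + wsum b z p' end.

Lemma wsum_pot (a b : graph_fun R V) (P : V -> R) y p : path E y p ->
  (forall x y, E x y -> b x y = a x y + P y - P x) ->
  wsum b y p = wsum a y p + P (last y p) - P y.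
Proof.
elim: p y => [|z p IH] y /=; first by move=> _ _; lra.
move=> /andP[Eyz hp] H; rewrite IH // H //; lra.
Qed.

Lemma wsum_le (b : graph_fun R V) M y p : path E y p ->
  (forall x y, E x y -> b x y <= M) -> wsum b y p <= (size p)%:R * M.
Proof.
elim: p y => [|z p IH] y /=; first by move=> _ _; lra.
move=> /andP[Eyz hp] H; have := IH z hp H; have := H _ _ Eyz.
rewrite -addn1 natrD; lra.
Qed.

Lemma wsum_ge (b : graph_fun R V) M y p : path E y p ->
  (forall x y, E x y -> - M <= b x y) -> - ((size p)%:R * M) <= wsum b y p.
Proof.
elim: p y => [|z p IH] y /=; first by move=> _ _; lra.
move=> /andP[Eyz hp] H; have := IH z hp H; have := H _ _ Eyz.
rewrite -addn1 natrD; lra.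
Qed.

End L.

Theorem lemma9 (R : realType) (V : finType) (E : rel V)
    (hE : strongly_connected E) (alpha : graph_fun R V) :
  exists b : R, forall (s : seq V) (x y : V),
    E x y -> b <= balance_seq E alpha s x y.
Proof.
set M := \sum_(q : V * V) `|alpha q.1 q.2|.
have M0 : 0 <= M by apply: sumr_ge0 => q _.
have hA : forall x y, `|alpha x y| <= M.
  move=> x y; rewrite /M (bigD1 (x, y)) //= lerDl.
  by apply: sumr_ge0.
have hU : forall x y, E x y -> alpha x y <= M.
  by move=> x y _; apply: le_trans (hA x y); apply: ler_norm.
have hL : forall x y, E x y -> - M <= alpha x y.
  by move=> x y _; have := hA x y; rewrite ler_norml => /andP[].
exists (- M - 2 * (#|V|%:R * M)) => s x y Exy.
have [P HP] := balance_seq_pot E alpha s.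
have /connectP [p0 hp0 hl0] := hE y x.
case: (shortenP hp0) hl0 => p hp hu _ hl0.
have hl : last y p = x by rewrite hl0.
have hsz : (size p < #|V|)%N.
  by have := card_uniqP hu; rewrite /= => <-; apply: max_card.
have hszR : (size p)%:R <= #|V|%:R :> R by rewrite ler_nat ltnW.
have e1 := wsum_pot hp HP; rewrite hl in e1.
have h1 := wsum_le hp (balance_seq_le M0 hU s).
have h2 := wsum_ge hp hL.
have h3 : (size p)%:R * M <= #|V|%:R * M :> R by rewrite ler_wpM2r.
rewrite HP //; have := hL _ _ Exy; lra.
Qed.
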